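(* For all $\varepsilon>0$ there exist $c,n_0\in\mathbb{N}$ such that for all primes $p\ge n_0$ the following holds. If $\delta\ge c/\log p$ (with $p^{\delta}$ an integer) and $r$ is a positive integer, then every proper $(r,p^{\delta})$-GAP $X\subseteq\mathbb{Z}_p$ is an $(r/p^{0.9\delta},\,0.1,\,\varepsilon)$-additive source of entropy rate $\delta r$ in $(\mathbb{Z}_p,+)$.
   Context: An $(r,s)$-GAP in $\mathbb{Z}_p$ is a set $\{b_0+\sum_{i=1}^r a_ib_i: a_i\in\mathbb{Z},\ 0\le a_i\le s-1\}$ with $b_0,\dots,b_r\in\mathbb{Z}_p$; proper means all $s^r$ sums are distinct. For $X\subseteq\mathbb{Z}_p$, $\mathrm{Sym}_{1-\alpha}(X)=\{g:|X\cap(X+g)|\ge(1-\alpha)|X|\}$, and $X$ is $(\alpha,\beta,\tau)$-additive if $|X+X|\le|X|^{1+\tau}$ and $|\mathrm{Sym}_{1-\alpha}(X)|\ge|X|^{\beta}$. Entropy rate $\delta'$ means $|X|\ge p^{\delta'}$. *)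

(* Defs.v *)
(* Stdlib Reals is imported first so that %R denotes MathComp's ring_scope;
   real-number arithmetic is written with explicit Stdlib function names. *)
From Stdlib Require Import Reals.
From mathcomp Require Import all_boot all_algebra.

Set Implicit Arguments.
Unset Strict Implicit.
Unset Printing Implicit Defensive.

Definition gap_elem (p r s : nat) (b0 : 'Z_p) (b : 'I_r -> 'Z_p)
  (a : {ffun 'I_r -> 'I_s}) : 'Z_p :=
  (b0 + \sum_(i < r) (b i *+ (a i : nat)))%R.

Definition GAP (p r s : nat) (b0 : 'Z_p) (b : 'I_r -> 'Z_p) : {set 'Z_p} :=
  [set gap_elem b0 b a | a : {ffun 'I_r -> 'I_s}].

Definition proper_GAP (p r s : nat) (b0 : 'Z_p) (b : 'I_r -> 'Z_p) : Prop :=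
  injective (@gap_elem p r s b0 b).

Definition sumset (p : nat) (X : {set 'Z_p}) : {set 'Z_p} :=
  [set (x + y)%R | x in X, y in X].

Definition translate (p : nat) (X : {set 'Z_p}) (g : 'Z_p) : {set 'Z_p} :=
  [set (x + g)%R | x in X].

Definition Sym (p : nat) (alpha : R) (X : {set 'Z_p}) : {set 'Z_p} :=
  [set g : 'Z_p |
    if Rle_dec (Rmult (Rminus (IZR 1) alpha) (INR #|X|))
               (INR #|X :&: translate X g|)
    then true else false].

Definition additive (p : nat) (X : {set 'Z_p}) (alpha beta tau : R) : Prop :=
  Rle (INR #|sumset X|) (Rpower (INR #|X|) (Rplus (IZR 1) tau)) /\
  Rle (Rpower (INR #|X|) beta) (INR #|Sym alpha X|).

Definition has_entropy_rate (p : nat) (X : {set 'Z_p}) (delta' : R) : Prop :=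
  Rle (Rpower (INR p) delta') (INR #|X|).

(* Main.v *)
From Pilot Require Import Defs.
From Stdlib Require Import Reals Lra Lia Psatz ZArith.
From mathcomp Require Import all_boot all_algebra.
From mathcomp Require Import zify.
Import GRing.Theory.


Section RealLemmas.
Local Open Scope R_scope.

Lemma Rpower_pow_gen (x y : R) (n : nat) : 0 < x -> Rpower (x ^ n) y = (Rpower x y) ^ n.
Proof.
intros Hx. rewrite <- (Rpower_pow n x Hx).
rewrite <- (Rpower_pow n (Rpower x y)) by (unfold Rpower; apply exp_pos).
rewrite !Rpower_mult. f_equal. ring.
Qed.

Lemma bern (y : R) (n : nat) : 0 <= y <= 1 -> 1 - INR n * y <= (1 - y) ^ n.
Proof.
intros Hy. induction n as [|n IH].
- simpl. lra.
- rewrite S_INR. simpl.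
  assert (H0 : 0 <= INR n) by apply pos_INR.
  assert (H1 : (1 - INR n * y) * (1 - y) <= (1 - y) ^ n * (1-y)).
  { apply Rmult_le_compat_r; lra. }
  nra.
Qed.

Lemma floor_nat (x : R) : 0 <= x -> exists k : nat, INR k <= x < INR k + 1.
Proof.
intros Hx. destruct (archimed x) as [H1 H2].
assert (Hz : Z.lt 0 (up x)) by (apply lt_IZR; lra).
exists (Z.to_nat (Z.sub (up x) 1)).
rewrite INR_IZR_INZ Z2Nat.id; [|lia]. rewrite minus_IZR. simpl. lra.
Qed.

Lemma INR_expn (m n : nat) : INR (expn m n) = INR m ^ n.
Proof.
induction n as [|n IH]; [reflexivity|].
rewrite expnS -multE mult_INR IH. simpl. reflexivity.
Qed.

Lemma INR_addn (m n : nat) : INR (addn m n) = INR m + INR n.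
Proof. rewrite -plusE. apply plus_INR. Qed.

Lemma INR_subn (m n : nat) : (n <= m)%N -> INR (subn m n) = INR m - INR n.
Proof. move=> /leP H. rewrite -minusE. apply minus_INR. exact H. Qed.

Lemma INR_le' (m n : nat) : (m <= n)%N -> INR m <= INR n.
Proof. move=> /leP. apply le_INR. Qed.

Lemma INR_lt' (m n : nat) : INR m < INR n -> (m < n)%N.
Proof. move=> H. apply/ltP. apply INR_lt. exact H. Qed.

End RealLemmas.

Section RealMain.
Local Open Scope R_scope.

Lemma facts (eps delta : R) (p s n : nat) : 0 < eps -> INR n * eps > 1 -> (2 <= p)%N ->
  INR (S n) / ln (INR p) <= delta -> Rpower (INR p) delta = INR s ->
  1 < INR p /\ 1 < INR s /\ 2 <= Rpower (INR s) eps.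
Proof.
intros He Hn Hp Hd Hs.
assert (Hp1 : 1 < INR p). { apply INR_le' in Hp. simpl in Hp. lra. }
assert (Hl : 0 < ln (INR p)). { rewrite <- ln_1. apply ln_increasing; lra. }
assert (Hc : INR (S n) <= delta * ln (INR p)).
{ apply Rmult_le_compat_r with (r := ln (INR p)) in Hd; [|lra].
  unfold Rdiv in Hd. rewrite Rmult_assoc Rinv_l in Hd; lra. }
rewrite S_INR in Hc. assert (H0 : 0 <= INR n) by apply pos_INR.
assert (Hn' : 0 <= INR n * eps) by nra.
split; [exact Hp1|]. split.
- rewrite <- Hs. unfold Rpower. pose proof (exp_ineq1_le (delta * ln (INR p))). lra.
- rewrite <- Hs. rewrite Rpower_mult. unfold Rpower.
  pose proof (exp_ineq1_le (delta * eps * ln (INR p))).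
  assert (eps * 1 <= eps * (delta * ln (INR p))) by (apply Rmult_le_compat_l; lra).
  nra.
Qed.

Lemma entropy_R (p s r : nat) (delta : R) : 1 < INR p -> Rpower (INR p) delta = INR s ->
  Rpower (INR p) (delta * INR r) <= INR (expn s r).
Proof.
intros Hp Hs. rewrite INR_expn -Rpower_mult Hs Rpower_pow. lra.
rewrite <- Hs. unfold Rpower. apply exp_pos.
Qed.

Lemma sumset_R (s r : nat) (eps : R) : 1 < INR s -> 2 <= Rpower (INR s) eps ->
  INR (expn (s + s) r) <= Rpower (INR (expn s r)) (1 + eps).
Proof.
intros Hs He. rewrite !INR_expn INR_addn Rpower_pow_gen; [|lra].
apply pow_incr. split; [lra|]. rewrite Rpower_plus Rpower_1; [|lra]. nra.
Qed.

Lemma sym_R (p s r k : nat) (delta : R) : 1 < INR p -> Rpower (INR p) delta = INR s -> 1 < INR s ->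
  INR k <= Rpower (INR s) (1/10) ->
  (k < s)%N /\
  (1 - INR r / Rpower (INR p) (9/10 * delta)) * INR (expn s r) <= INR (expn (s - k) r).
Proof.
intros Hp Hs Hs1 Hk.
assert (HT : Rpower (INR s) (1/10) < INR s).
{ rewrite <- (Rpower_1 (INR s)) at 2; [|lra]. apply Rpower_lt; lra. }
assert (Hks : (k < s)%N) by (apply INR_lt'; lra).
split; [exact Hks|].
assert (HN : Rpower (INR p) (9/10 * delta) = Rpower (INR s) (9/10)).
{ rewrite <- Hs, Rpower_mult. f_equal. ring. }
assert (HTN : Rpower (INR s) (1/10) * Rpower (INR s) (9/10) = INR s).
{ rewrite <- Rpower_plus. replace (1/10 + 9/10) with 1 by field. apply Rpower_1; lra. }
assert (HNpos : 0 < Rpower (INR s) (9/10)) by (unfold Rpower; apply exp_pos).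
assert (HTpos : 0 < Rpower (INR s) (1/10)) by (unfold Rpower; apply exp_pos).
rewrite HN !INR_expn INR_subn; [|by apply ltnW].
move: Hk HT HTN HTpos HNpos Hs1.
set T := Rpower (INR s) (1/10). set N := Rpower (INR s) (9/10).
set S := INR s. set K := INR k. move=> Hk HT HTN HTpos HNpos Hs1.
assert (HK0 : 0 <= K) by apply pos_INR.
set y := K / S.
assert (Hy : 0 <= y <= 1).
{ unfold y. split. unfold Rdiv; apply Rmult_le_pos; [lra| apply Rlt_le, Rinv_0_lt_compat; lra].
  apply Rmult_le_reg_r with S; [lra|]. unfold Rdiv. rewrite Rmult_assoc Rinv_l; lra. }
assert (HSK : S - K = S * (1 - y)). { unfold y. field. lra. }
rewrite HSK Rpow_mult_distr.
pose proof (bern y r Hy) as Hb.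
assert (Hal : INR r * y <= INR r / N).
{ assert (HrN : INR r / N = INR r * T / S). { rewrite <- HTN. field. lra. }
  rewrite HrN. unfold y. unfold Rdiv. rewrite Rmult_assoc. apply Rmult_le_compat_l.
  apply pos_INR. apply Rmult_le_compat_r. apply Rlt_le, Rinv_0_lt_compat; lra. lra. }
assert (HSr : 0 < S ^ r) by (apply pow_lt; lra).
rewrite Rmult_comm. apply Rmult_le_compat_l; lra.
Qed.

Lemma sym_R2 (s r k : nat) : 1 < INR s -> Rpower (INR s) (1/10) < INR k + 1 ->
  Rpower (INR (expn s r)) (1/10) <= INR (expn k.+1 r).
Proof.
intros Hs Hk. rewrite !INR_expn Rpower_pow_gen; [|lra]. rewrite S_INR.
apply pow_incr. split; [unfold Rpower; apply Rlt_le, exp_pos | lra].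
Qed.

Lemma floor_T (s : nat) : exists k : nat, INR k <= Rpower (INR s) (1/10) < INR k + 1.
Proof. apply floor_nat. unfold Rpower. apply Rlt_le, exp_pos. Qed.

End RealMain.

Set Implicit Arguments. Unset Strict Implicit.

Lemma card_GAP p r s b0 b : @proper_GAP p r s b0 b -> #|@GAP p r s b0 b| = expn s r.
Proof.
move=> Hinj. rewrite /GAP card_imset //. by rewrite card_ffun !card_ord.
Qed.

Lemma addlt (s : nat) (x y : 'I_s) : (x + y < s + s)%N.
Proof. have := ltn_ord x; have := ltn_ord y. lia. Qed.

Lemma sum_split p r (b : 'I_r -> 'Z_p) (f g : 'I_r -> nat) :
  (\sum_(i < r) b i *+ (f i + g i) = \sum_(i < r) b i *+ f i + \sum_(i < r) b i *+ g i)%R.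
Proof. rewrite -big_split /=. apply: eq_bigr => i _. by rewrite mulrnDr. Qed.

Lemma card_sumset p r s b0 b : (#|sumset (@GAP p r s b0 b)| <= expn (s + s) r)%N.
Proof.
pose F := fun c : {ffun 'I_r -> 'I_(s+s)} => (b0 + b0 + \sum_(i < r) b i *+ (c i : nat))%R.
apply: (@leq_trans #|[set F c | c : {ffun 'I_r -> 'I_(s+s)}]|).
  apply: subset_leq_card. apply/subsetP => z /imset2P [x y /imsetP [a _ ->] /imsetP [a' _ ->] ->].
  apply/imsetP. exists [ffun i => Ordinal (addlt (a i) (a' i))] => //.
  rewrite /F /gap_elem. under [X in _ = (_ + X)%R]eq_bigr => i _ do rewrite ffunE /=.
  rewrite sum_split. rewrite !addrA. congr (_ + _)%R. rewrite -!addrA. congr (_ + _)%R. by rewrite addrC.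
apply: leq_trans (leq_imset_card _ _) _. by rewrite card_ffun !card_ord.
Qed.

Lemma addlt2 (s k : nat) (Hk : (k < s)%N) (x : 'I_(s - k)) (y : 'I_k.+1) : (x + y < s)%N.
Proof. have := ltn_ord x; have := ltn_ord y. lia. Qed.

Lemma subord (s k : nat) (x : 'I_(s - k)) : (x < s)%N.
Proof. have := ltn_ord x. lia. Qed.

Lemma INR_le'' (m n : nat) : (m <= n)%N -> Rle (INR m) (INR n).
Proof. move=> /leP. apply le_INR. Qed.

Lemma sym_lb p r s k b0 b alpha : @proper_GAP p r s b0 b -> (k < s)%N ->
  Rle (Rmult (Rminus (IZR 1) alpha) (INR #|@GAP p r s b0 b|)) (INR (expn (s - k) r)) ->
  (expn k.+1 r <= #|Sym alpha (@GAP p r s b0 b)|)%N.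
Proof.
move=> Hinj Hk Hcond.
have Hk1 : (k.+1 <= s)%N by [].
pose w := fun a : {ffun 'I_r -> 'I_k.+1} => [ffun i => widen_ord Hk1 (a i)] : {ffun 'I_r -> 'I_s}.
pose h := fun a : {ffun 'I_r -> 'I_k.+1} => (\sum_(i<r) b i *+ (a i : nat))%R.
have Hw : forall a, gap_elem b0 b (w a) = (b0 + h a)%R.
  move=> a; rewrite /gap_elem /h; congr (_ + _)%R; apply eq_bigr => i _; by rewrite ffunE.
have hinj : injective h.
  move=> a1 a2 E. have E' : w a1 = w a2 by apply: Hinj; rewrite !Hw E.
  apply/ffunP => i. have := congr1 (fun f : {ffun 'I_r -> 'I_s} => f i) E'. rewrite !ffunE => /(congr1 val) /= H. exact: val_inj.
have Hc : #|[set h a | a : {ffun 'I_r -> 'I_k.+1}]| = expn k.+1 r.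
  by rewrite card_imset // card_ffun !card_ord.
rewrite -Hc. apply subset_leq_card. apply/subsetP => g /imsetP [a _ ->]. rewrite inE.
case: Rle_dec => // Hn; exfalso; apply Hn.
apply: Rle_trans Hcond _. apply INR_le''.
pose sh := fun c : {ffun 'I_r -> 'I_(s-k)} => [ffun i => Ordinal (addlt2 Hk (c i) (a i))] : {ffun 'I_r -> 'I_s}.
pose wc := fun c : {ffun 'I_r -> 'I_(s-k)} => [ffun i => Ordinal (subord (c i))] : {ffun 'I_r -> 'I_s}.
have Hid : forall c, gap_elem b0 b (sh c) = (gap_elem b0 b (wc c) + h a)%R.
  move=> c. rewrite /gap_elem /h -addrA -sum_split. congr (_ + _)%R. apply eq_bigr => i _. by rewrite !ffunE.
have shinj : injective (fun c => gap_elem b0 b (sh c)).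
  move=> c1 c2 /Hinj E. apply/ffunP => i. have := congr1 (fun f : {ffun 'I_r -> 'I_s} => f i) E. rewrite !ffunE => /(congr1 val) /= H.
  apply: val_inj => /=. lia.
have Hc2 : #|[set gap_elem b0 b (sh c) | c : {ffun 'I_r -> 'I_(s-k)}]| = expn (s - k) r.
  by rewrite card_imset // card_ffun !card_ord.
rewrite -Hc2. apply subset_leq_card. apply/subsetP => z /imsetP [c _ ->].
rewrite in_setI. apply/andP; split.
  by apply/imsetP; exists (sh c).
rewrite Hid. apply/imsetP. exists (gap_elem b0 b (wc c)) => //. by apply/imsetP; exists (wc c).
Qed.


Import Pilot.Defs.

Theorem lemma3p6 :
  forall eps : R, Rlt (IZR 0) eps ->
  exists c n0 : nat,
  forall p : nat, prime p -> (n0 <= p)%N ->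
  forall (delta : R) (s : nat),
    Rle (Rdiv (INR c) (ln (INR p))) delta ->
    Rpower (INR p) delta = INR s ->
  forall r : nat, (0 < r)%N ->
  forall (b0 : 'Z_p) (b : 'I_r -> 'Z_p),
    @proper_GAP p r s b0 b ->
    additive (@GAP p r s b0 b)
             (Rdiv (INR r) (Rpower (INR p) (Rmult (Rdiv (IZR 9) (IZR 10)) delta)))
             (Rdiv (IZR 1) (IZR 10)) eps /\
    has_entropy_rate (@GAP p r s b0 b) (Rmult delta (INR r)).
Proof.
intros eps Heps.
destruct (INR_archimed eps 1 Heps) as [n Hn].
exists n.+1, 2. intros p Hp Hp2 delta s Hdel Hs r Hr b0 b Hinj.
destruct (facts eps delta p s n Heps Hn Hp2 Hdel Hs) as [Hp1 [Hs1 Heps2]].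
destruct (floor_T s) as [k [Hk1 Hk2]].
destruct (sym_R p s r k delta Hp1 Hs Hs1 Hk1) as [Hks Hsym].
have Hlb := sym_lb (alpha := Rdiv (INR r) (Rpower (INR p) (Rmult (Rdiv (IZR 9) (IZR 10)) delta))) Hinj Hks.
rewrite /additive /has_entropy_rate (card_GAP Hinj).
split; [split|].
- eapply Rle_trans; [apply INR_le'', card_sumset|]. by apply sumset_R.
- apply: Rle_trans (sym_R2 s r k Hs1 Hk2) (INR_le'' (Hlb _)). by rewrite (card_GAP Hinj).
- by apply entropy_R.
Qed.
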